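(* Let $(\mathcal A,\mathcal B,\mathcal E)$ and $P$ be as in the context with $P(\mathcal A\cup\mathcal B)>0$, and let $(\mathcal A^+,\mathcal A^-,\mathcal B^+,\mathcal B^-,z)$ be any output of $\mathsf{LinOpt}(\mathcal A,\mathcal B,\mathcal E,P)$. Then: 1. $P(\mathcal A^+)P(\mathcal B^+)\ge P(\mathcal A^-)P(\mathcal B^-)$. 2. If $P(\mathcal A^+)P(\mathcal B^+)=P(\mathcal A^-)P(\mathcal B^-)$, then (a) $\mathbf 1^{\top}z=P(\mathcal A\cup\mathcal B)$; (b) $\frac{P(\mathcal A)}{P(\mathcal A\cup\mathcal B)}(M^{\top}z)_v=P(\{v\})$ for all $v\in\mathcal A$; (c) $\frac{P(\mathcal B)}{P(\mathcal A\cup\mathcal B)}(M^{\top}z)_v=P(\{v\})$ for all $v\in\mathcal B$.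
   Context: $\mathcal A,\mathcal B$ are disjoint finite sets, $\mathcal E\subseteq\mathcal A\times\mathcal B$, and $P:\mathcal A\cup\mathcal B\to[0,\infty)$ is a weight function with $P(S)=\sum_{v\in S}P(\{v\})$. Let $E\in\mathbb R^{\mathcal E\times(\mathcal A\cup\mathcal B)}$ be the edge incidence matrix of the bipartite graph ($E_{e,w}=1$ if $w$ is an endpoint of $e$, else $0$) and $M=\begin{pmatrix}E\\ I\end{pmatrix}$, rows indexed by $\mathcal E\sqcup(\mathcal A\cup\mathcal B)$. Define $r\in\mathbb R^{\mathcal A\cup\mathcal B}$ by: if $P(\mathcal A)>0$ and $P(\mathcal B)>0$, $r_v=P(\{v\})P(\mathcal A\cup\mathcal B)/P(\mathcal A)$ for $v\in\mathcal A$ and $r_v=P(\{v\})P(\mathcal A\cup\mathcal B)/P(\mathcal B)$ for $v\in\mathcal B$; otherwise $r_v=P(\{v\})$. $\mathsf{LinOpt}(\mathcal A,\mathcal B,\mathcal E,P)$ takes an optimal solution $y\in\{0,1\}^{\mathcal A\cup\mathcal B}$ of the linear program $\max r^{\top}y$ s.t. $y\ge\mathbf 0$, $My\le\mathbf 1$ (an integral optimum exists) and an optimal solution $z\in\mathbb R^{\mathcal E\sqcup(\mathcal A\cup\mathcal B)}$ of the dual program $\min\mathbf 1^{\top}z$ s.t. $z\ge\mathbf 0$, $M^{\top}z\ge r$, and returns $\mathcal A^+=\{v\in\mathcal A:y_v=1\}$, $\mathcal A^-=\mathcal A\setminus\mathcal A^+$, $\mathcal B^+=\{v\in\mathcal B:y_v=1\}$,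 $\mathcal B^-=\mathcal B\setminus\mathcal B^+$, and $z$. *)

(* Defs.v *)
From HB Require Import structures.
From mathcomp Require Import all_boot all_order all_algebra.
Set Implicit Arguments. Unset Strict Implicit. Unset Printing Implicit Defensive.
Import Order.TTheory GRing.Theory Num.Theory.
Local Open Scope ring_scope.

Section LinOpt.
Variables (TA TB : finType) (E : {set TA * TB}) (R : realFieldType).

Definition vert := (TA + TB)%type.
Definition Aset : {set vert} := [set v | if v is inl _ then true else false].
Definition Bset : {set vert} := [set v | if v is inr _ then true else false].

Definition edge := {e : TA * TB | e \in E}.

Definition rowidx := (edge + vert)%type.

Variable P : vert -> R.
Definition PS (S : {set vert}) : R := \sum_(v in S) P v.

Definition rw (v : vert) : R :=
  if (0 < PS Aset) && (0 < PS Bset) then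
    match v with
    | inl _ => P v * PS setT / PS Aset
    | inr _ => P v * PS setT / PS Bset
    end
  else P v.

(* edge incidence matrix E and M = (E ; I) *)
Definition incE (e : edge) (w : vert) : R :=
  match w with
  | inl a => ((val e).1 == a)%:R
  | inr b => ((val e).2 == b)%:R
  end.
Definition Mmx (i : rowidx) (w : vert) : R :=
  match i with
  | inl e => incE e w
  | inr u => (u == w)%:R
  end.

Definition My (y : vert -> R) (i : rowidx) : R := \sum_w Mmx i w * y w.
Definition MTz (z : rowidx -> R) (w : vert) : R := \sum_i Mmx i w * z i.

Definition primal_feasible (y : vert -> R) : Prop :=
  (forall v, 0 <= y v) /\ (forall i, My y i <= 1).
Definition primal_obj (y : vert -> R) : R := \sum_v rw v * y v.
Definition primal_optimal (y : vert -> R) : Prop :=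
  primal_feasible y /\
  forall y', primal_feasible y' -> primal_obj y' <= primal_obj y.

Definition dual_feasible (z : rowidx -> R) : Prop :=
  (forall i, 0 <= z i) /\ (forall v, rw v <= MTz z v).
Definition dual_obj (z : rowidx -> R) : R := \sum_i z i.
Definition dual_optimal (z : rowidx -> R) : Prop :=
  dual_feasible z /\
  forall z', dual_feasible z' -> dual_obj z <= dual_obj z'.

Definition LinOpt_output (Ap Am Bp Bm : {set vert}) (z : rowidx -> R) : Prop :=
  exists y : vert -> R,
    [/\ forall v, y v = 0 \/ y v = 1,
        primal_optimal y,
        dual_optimal z,
        Ap = [set v in Aset | y v == 1] /\ Am = Aset :\: Ap
      & Bp = [set v in Bset | y v == 1] /\ Bm = Bset :\: Bp].

End LinOpt.

Arguments LinOpt_output {TA TB} E {R} P Ap Am Bp Bm z.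
Arguments MTz {TA TB E R} z w.
Arguments dual_obj {TA TB E R} z.
Arguments PS {TA TB R} P S.

(* Main.v *)
Require Import Defs.
From HB Require Import structures.
From mathcomp Require Import all_boot all_order all_algebra.
From mathcomp Require Import ring lra.
Set Implicit Arguments. Unset Strict Implicit. Unset Printing Implicit Defensive.
Import Order.TTheory GRing.Theory Num.Theory.
Local Open Scope ring_scope.
Section Farkas.
Variable R : realFieldType.

Lemma argmax_ex (T : finType) (P : pred T) (h : T -> R) i0 :
  P i0 -> exists2 i, P i & forall k, P k -> h k <= h i.
Proof.
move=> Pi0; case: (@arg_maxP _ R T i0 P h Pi0) => i Pi H.
by exists i.
Qed.

Definition cert (I J : finType) (c : I -> option J -> R) :=
  exists lam : I -> R, [/\ forall i, 0 <= lam i,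
    forall j, \sum_i lam i * c i (Some j) = 0 &
    \sum_i lam i * c i None < 0].

Lemma cert_comb (I K J : finType) (c : I -> option J -> R) (w : K -> I -> R) :
  (forall k i, 0 <= w k i) ->
  cert (fun k o => \sum_i w k i * c i o) -> cert c.
Proof.
move=> w0 [lam [l0 lS lN]].
have key : forall o, \sum_i (\sum_k lam k * w k i) * c i o =
                     \sum_k lam k * \sum_i w k i * c i o.
  move=> o; under eq_bigr do rewrite mulr_suml.
  rewrite exchange_big /=; apply: eq_bigr => k _.
  by rewrite mulr_sumr; apply: eq_bigr => i _; rewrite mulrA.
exists (fun i => \sum_k lam k * w k i); split.
- by move=> i; apply: sumr_ge0 => k _; apply: mulr_ge0.
- by move=> j; rewrite key.
- by rewrite key.
Qed.

Lemma sum_delta (I : finType) (i0 : I) (f : I -> R) :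
  \sum_i (i == i0)%:R * f i = f i0.
Proof.
rewrite (bigD1 i0) //= big1 ?addr0 ?eqxx ?mul1r // => i /negbTE ->.
by rewrite mul0r.
Qed.

Lemma fm (J : finType) n : forall (S : {set J}), #|S| = n ->
  forall (I : finType) (c : I -> option J -> R),
  (forall i j, j \notin S -> c i (Some j) = 0) -> ~ cert c ->
  exists x : J -> R, forall i, \sum_j c i (Some j) * x j <= c i None.
Proof.
elim: n => [|n IH] S cS I c cz nc.
  have S0 : S = set0 by apply/eqP; rewrite -cards_eq0 cS.
  have Hz : forall i j, c i (Some j) = 0 by move=> i j; apply: cz; rewrite S0 inE.
  case: (boolP [exists i, c i None < 0]) => [/existsP [i0 Hi0]|Hn].
    exfalso; apply: nc; exists (fun i => (i == i0)%:R); split.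
    - by move=> i; rewrite ler0n.
    - by move=> j; rewrite sum_delta Hz.
    - by rewrite sum_delta.
  exists (fun _ => 0) => i; rewrite big1 => [|j _]; last by rewrite mulr0.
  by rewrite leNgt; apply/negP => H; move/existsP: Hn; apply; exists i.
have : (0 < #|S|)%N by rewrite cS.
case/card_gt0P => j jS.
have cS' : #|S :\ j| = n by apply/eqP; rewrite -eqSS -cS (cardsD1 j S) jS.
pose a i := c i (Some j).
pose w (k : (I + I * I)%type) (i : I) : R :=
  match k with
  | inl i' => ((a i' == 0) && (i == i'))%:R
  | inr pq => if (0 < a pq.1) && (a pq.2 < 0) then
                (i == pq.1)%:R * (- a pq.2) + (i == pq.2)%:R * a pq.1 else 0
  end.
have w0 : forall k i, 0 <= w k i.
  case=> [i'|[p q]] i /=; first by rewrite ler0n.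
  case: ifP => // /andP [Hp Hq].
  by apply: addr_ge0; apply: mulr_ge0; rewrite ?ler0n // ?oppr_ge0 ltW.
have wl : forall i' h, \sum_i w (inl i') i * h i = (a i' == 0)%:R * h i'.
  move=> i' h /=.
  transitivity (\sum_i (i == i')%:R * ((a i' == 0)%:R * h i)); last exact: sum_delta.
  apply: eq_bigr => i _.
  by case: (a i' == 0); case: (i == i'); rewrite /= ?mul1r ?mul0r ?mulr0 ?mulr1.
have wr : forall p q h, \sum_i w (inr (p, q)) i * h i =
    if (0 < a p) && (a q < 0) then - a q * h p + a p * h q else 0.
  move=> p q h /=; case: ifP => _; last by rewrite big1 // => i _; rewrite mul0r.
  under eq_bigr do rewrite mulrDl -!mulrA.
  by rewrite big_split /= !sum_delta.
pose d k o := \sum_i w k i * c i o.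
have dz : forall k j', j' \notin S :\ j -> d k (Some j') = 0.
  move=> k j'; rewrite !inE negb_and negbK => /orP [/eqP ->|Hj'].
    case: k => [i'|[p q]]; rewrite /d ?wl ?wr -/(a _).
      by case: eqP => [->|_]; rewrite ?mulr0 ?mul0r.
    by case: ifP => // _; rewrite mulrC addrC mulrN mulrC subrr.
  rewrite /d big1 // => i _; by rewrite cz ?mulr0.
have nd : ~ cert d by move=> H; apply: nc; apply: (cert_comb w0 H).
case: (IH _ cS' _ d dz nd) => x' Hx'.
pose g i := c i None - \sum_j' c i (Some j') * x' j'.
have dg : forall k, 0 <= \sum_i w k i * g i.
  move=> k; have := Hx' k; rewrite /d -subr_ge0.
  congr (0 <= _); rewrite /g.
  under [RHS]eq_bigr do rewrite mulrBr mulr_sumr.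
  rewrite sumrB; congr (_ - _).
  under eq_bigr do rewrite mulr_suml.
  rewrite exchange_big /=; apply: eq_bigr => j' _; apply: eq_bigr => i _.
  by rewrite mulrA.
have gZ : forall i, a i = 0 -> 0 <= g i.
  by move=> i Hi; have := dg (inl i); rewrite wl Hi eqxx mul1r.
have gPN : forall p q, 0 < a p -> a q < 0 -> 0 <= - a q * g p + a p * g q.
  by move=> p q Hp Hq; have := dg (inr (p, q)); rewrite wr Hp Hq.
suff [u Hu] : exists u, forall i, a i * u <= g i.
  exists (fun j' => x' j' + (j' == j)%:R * u) => i.
  have -> : \sum_j' c i (Some j') * (x' j' + (j' == j)%:R * u) =
            \sum_j' c i (Some j') * x' j' + a i * u.
    under eq_bigr do rewrite mulrDr.
    rewrite big_split /=; congr (_ + _).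
    under eq_bigr do rewrite mulrA [c i _ * _]mulrC -mulrA.
    by rewrite sum_delta.
  by have := Hu i; rewrite /g; lra.
case: (boolP [exists q, a q < 0]) => [/existsP [q0 Hq0]|HN].
  have [qm Hqm Hmax] := @argmax_ex _ (fun q => a q < 0) (fun q => g q / a q) _ Hq0.
  exists (g qm / a qm) => i.
  have aqm0 : a qm != 0 by rewrite ltr0_neq0.
  have gqm : g qm = (g qm / a qm) * a qm by rewrite divfK.
  move: (g qm / a qm) gqm Hmax => u gqm Hmax.
  case: (ltrgt0P (a i)) => Hai.
  - have := gPN _ _ Hai Hqm; rewrite gqm => H. nra.
  - have Hle := Hmax i Hai.
    have gi : g i = (g i / a i) * a i by rewrite divfK // ltr0_neq0.
    move: (g i / a i) gi Hle => v gi Hle. rewrite gi. nra.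
  - by rewrite Hai mul0r gZ.
case: (boolP [exists p, 0 < a p]) => [/existsP [p0 Hp0]|HP].
  have [pm Hpm Hmax] := @argmax_ex _ (fun p => 0 < a p) (fun p => - (g p / a p)) _ Hp0.
  exists (g pm / a pm) => i.
  case: (ltrgt0P (a i)) => Hai.
  - have Hle := Hmax i Hai.
    have gi : g i = (g i / a i) * a i by rewrite divfK // gt_eqF.
    move: (g i / a i) gi Hle => v gi Hle. rewrite gi. nra.
  - by exfalso; move/existsP: HN; apply; exists i.
  - by rewrite Hai mul0r gZ.
exists 0 => i; rewrite mulr0.
case: (ltrgt0P (a i)) => Hai.
- by exfalso; move/existsP: HP; apply; exists i.
- by exfalso; move/existsP: HN; apply; exists i.
- exact: gZ.
Qed.

End Farkas.
Section LP.
Variables (TA TB : finType) (E : {set TA * TB}) (R : realFieldType).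
Variable P : vert TA TB -> R.

Lemma sum_unit (F : unit -> R) : \sum_(i : unit) F i = F tt.
Proof. by rewrite (bigD1 tt) //= big1 ?addr0 // => -[]; rewrite eqxx. Qed.

Lemma Qle (y : vert TA TB -> R) (z : rowidx E -> R) :
  primal_feasible E y -> (forall i, 0 <= z i) ->
  \sum_v MTz z v * y v <= dual_obj z.
Proof.
move=> [y0 yM] z0.
have -> : \sum_v MTz z v * y v = \sum_i z i * My y i.
  rewrite /MTz /My; under eq_bigr do rewrite mulr_suml.
  rewrite exchange_big /=; apply: eq_bigr => i _; rewrite mulr_sumr.
  apply: eq_bigr => v _; ring.
rewrite /dual_obj; apply: ler_sum => i _.
by rewrite -[X in _ <= X]mulr1; apply: ler_wpM2l.
Qed.

Lemma objle (y : vert TA TB -> R) (z : rowidx E -> R) :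
  primal_feasible E y -> dual_feasible P z ->
  primal_obj P y <= \sum_v MTz z v * y v.
Proof.
move=> [y0 yM] [z0 zr]; apply: ler_sum => v _.
by apply: ler_wpM2r.
Qed.

Lemma weak (y : vert TA TB -> R) (z : rowidx E -> R) :
  primal_feasible E y -> dual_feasible P z -> primal_obj P y <= dual_obj z.
Proof.
move=> hy hz; apply: le_trans (objle hy hz) _.
by apply: Qle => //; case: hz.
Qed.

Lemma cslack (y : vert TA TB -> R) (z : rowidx E -> R) :
  primal_feasible E y -> dual_feasible P z -> primal_obj P y = dual_obj z ->
  forall v, y v = 1 -> MTz z v = rw P v.
Proof.
move=> hy hz he v yv.
have h1 := objle hy hz; have h2 := Qle hy (proj1 hz).
have hsum : \sum_w (MTz z w - rw P w) * y w = 0.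
  under eq_bigr do rewrite mulrBl.
  rewrite sumrB -/(primal_obj P y); apply/eqP; rewrite subr_eq0 eq_le h1 /=.
  by rewrite andbT he.
have hge : forall w, true -> 0 <= (MTz z w - rw P w) * y w.
  move=> w _; apply: mulr_ge0; first by rewrite subr_ge0; case: hz.
  by case: hy.
have := @psumr_eq0P R _ xpredT (fun w => (MTz z w - rw P w) * y w) hge hsum v isT.
by rewrite /= yv mulr1 => /eqP; rewrite subr_eq0 => /eqP.
Qed.

Lemma strong (y : vert TA TB -> R) :
  primal_optimal E P y -> exists z : rowidx E -> R,
    dual_feasible P z /\ dual_obj z <= primal_obj P y.
Proof.
move=> [hy yopt].
pose c (k : ((rowidx E + vert TA TB) + unit)%type) (o : option (rowidx E)) : R :=
 match k, o with
 | inl (inl i), Some j => - (j == i)%:R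
 | inl (inl i), None => 0
 | inl (inr v), Some j => - Mmx R j v
 | inl (inr v), None => - rw P v
 | inr _, Some _ => 1
 | inr _, None => primal_obj P y
 end.
have nc : ~ cert c.
  move=> [lam [l0 lS lN]].
  pose mu i := lam (inl (inl i)); pose yv v := lam (inl (inr v)); pose t := lam (inr tt).
  have hS : forall j, My yv j = t - mu j.
    move=> j; have := lS j; rewrite big_sumType big_sumType sum_unit /=.
    have -> : \sum_i lam (inl (inl i)) * - (j == i)%:R = - mu j.
      rewrite -(sum_delta j mu) -sumrN; apply: eq_bigr => i _.
      by rewrite eq_sym mulrN mulrC.
    have -> : \sum_i lam (inl (inr i)) * - Mmx R j i = - My yv j.
      rewrite /My -sumrN; apply: eq_bigr => i _; by rewrite mulrN mulrC.
    rewrite mulr1 -/t; lra.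
  have hN : t * primal_obj P y < primal_obj P yv.
    move: lN; rewrite big_sumType big_sumType sum_unit /=.
    rewrite big1 => [|i _]; last by rewrite mulr0.
    have -> : \sum_i lam (inl (inr i)) * - rw P i = - primal_obj P yv.
      rewrite /primal_obj -sumrN; apply: eq_bigr => i _; by rewrite mulrN mulrC.
    rewrite -/t mulrC; lra.
  have t0 : 0 <= t by apply: l0.
  have yv0 : forall v, 0 <= yv v by move=> v; apply: l0.
  case: (ltrgt0P t) => ht.
  - pose y' v := yv v / t.
    have fy' : primal_feasible E y'.
      split; first by move=> v; apply: divr_ge0.
      move=> i; have -> : My y' i = My yv i / t.
        by rewrite /My mulr_suml; apply: eq_bigr => w _; rewrite mulrA.
      rewrite ler_pdivrMr // mul1r hS; have := l0 (inl (inl i)); rewrite -/(mu i); lra.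
    have := yopt _ fy'.
    have -> : primal_obj P y' = primal_obj P yv / t.
      by rewrite /primal_obj mulr_suml; apply: eq_bigr => w _; rewrite mulrA.
    rewrite ler_pdivrMr // mulrC => H; move: hN; rewrite ltNge H //.
  - by move: t0; rewrite leNgt ht.
  - have yz : forall v, yv v = 0.
      move=> v; have := hS (inr v).
      have -> : My yv (inr v) = yv v.
        transitivity (\sum_w (w == v)%:R * yv w); last exact: sum_delta.
        rewrite /My; apply: eq_bigr => w _ /=; by rewrite eq_sym.
      have := l0 (inl (inl (inr v))); rewrite -/(mu _) ht => h1 h2.
      have := yv0 v; lra.
    move: hN; rewrite ht mul0r /primal_obj big1 ?ltxx // => v _.
    by rewrite yz mulr0.
have := @fm R (rowidx E) #|[set: rowidx E]| setT erefl _ c.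
case=> [i j|//|x Hx]; first by rewrite inE.
exists x; split; [split|].
- move=> i; have := Hx (inl (inl i)) => /=.
  rewrite (eq_bigr (fun j => - ((j == i)%:R * x j))); last by move=> j _; rewrite mulNr.
  by rewrite sumrN sum_delta oppr_le0.
- move=> v; have := Hx (inl (inr v)) => /=.
  rewrite (eq_bigr (fun j => - (Mmx R j v * x j))); last by move=> j _; rewrite mulNr.
  by rewrite sumrN lerN2.
- have := Hx (inr tt) => /=.
  by rewrite /dual_obj (eq_bigr (fun j => x j)) // => j _; rewrite mul1r.
Qed.

End LP.
Section Main.
Variables (TA TB : finType) (E : {set TA * TB}) (R : realFieldType).

Lemma sumA (F : vert TA TB -> R) : \sum_(v in Aset TA TB) F v = \sum_x F (inl x).
Proof.
rewrite big_mkcond big_sumType /=.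
rewrite [X in _ + X]big1 ?addr0 => [|x _]; last by rewrite inE.
by apply: eq_bigr => x _; rewrite inE.
Qed.

Lemma sumB (F : vert TA TB -> R) : \sum_(v in Bset TA TB) F v = \sum_x F (inr x).
Proof.
rewrite big_mkcond big_sumType /=.
rewrite [X in X + _]big1 ?add0r => [|x _]; last by rewrite inE.
by apply: eq_bigr => x _; rewrite inE.
Qed.

Lemma sumT (F : vert TA TB -> R) :
  \sum_v F v = \sum_(v in Aset TA TB) F v + \sum_(v in Bset TA TB) F v.
Proof. by rewrite sumA sumB big_sumType. Qed.

Lemma PS_sel (P y : vert TA TB -> R) (X : {set vert TA TB}) :
  (forall v, y v = 0 \/ y v = 1) ->
  PS P [set v in X | y v == 1] = \sum_(v in X) P v * y v.
Proof.
move=> y01; rewrite /PS big_mkcond [RHS]big_mkcond; apply: eq_bigr => v _.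
rewrite !inE; case: (v \in X) => //=.
have h01 : (0 == 1 :> R) = false by rewrite eq_sym oner_eq0.
by case: (y01 v) => ->; rewrite ?h01 ?eqxx ?mulr0 ?mulr1.
Qed.

Lemma PS_diff (P : vert TA TB -> R) (X Y : {set vert TA TB}) :
  Y \subset X -> PS P (X :\: Y) = PS P X - PS P Y.
Proof.
move=> sYX; rewrite /PS [\sum_(v in X) _](big_setID Y) /=.
by rewrite (setIidPr sYX) addrC addrK.
Qed.

Lemma sum_ind (T : finType) (a : T) : \sum_i (a == i)%:R = 1 :> R.
Proof.
rewrite (bigD1 a) //= eqxx big1 ?addr0 // => i /negbTE.
by rewrite eq_sym => ->.
Qed.

Lemma My_inr (y : vert TA TB -> R) u : My (E:=E) y (inr u) = y u.
Proof.
transitivity (\sum_w (w == u)%:R * y w); last exact: sum_delta.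
by apply: eq_bigr => w _ /=; rewrite eq_sym.
Qed.

Definition yA (v : vert TA TB) : R := if v is inl _ then 1 else 0.
Definition yB (v : vert TA TB) : R := if v is inr _ then 1 else 0.

Lemma yA_feas : primal_feasible E yA.
Proof.
split; first by case=> x; rewrite /yA ?ler01 ?lexx.
case=> [e|u]; last by rewrite My_inr; case: u; rewrite /yA ?lexx ?ler01.
rewrite /My big_sumType /=.
rewrite [X in _ + X]big1 ?addr0 => [|x _]; last by rewrite mulr0.
under eq_bigr do rewrite mulr1.
by rewrite sum_ind.
Qed.

Lemma yB_feas : primal_feasible E yB.
Proof.
split; first by case=> x; rewrite /yB ?ler01 ?lexx.
case=> [e|u]; last by rewrite My_inr; case: u; rewrite /yB ?lexx ?ler01.
rewrite /My big_sumType /=.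
rewrite [X in X + _]big1 ?add0r => [|x _]; last by rewrite mulr0.
under eq_bigr do rewrite mulr1.
by rewrite sum_ind.
Qed.

End Main.

Theorem lemma4 (TA TB : finType) (E : {set TA * TB}) (R : realFieldType)
    (P : vert TA TB -> R) :
  (forall v, 0 <= P v) ->
  0 < PS P setT ->
  forall (Ap Am Bp Bm : {set vert TA TB}) (z : rowidx E -> R),
    LinOpt_output E P Ap Am Bp Bm z ->
    PS P Am * PS P Bm <= PS P Ap * PS P Bp /\
    (PS P Ap * PS P Bp = PS P Am * PS P Bm ->
       [/\ dual_obj z = PS P setT,
           (forall v, v \in Aset TA TB ->
              PS P (Aset TA TB) / PS P setT * MTz z v = P v)
         & (forall v, v \in Bset TA TB ->
              PS P (Bset TA TB) / PS P setT * MTz z v = P v)]).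
Proof.
move=> P0 S0 Ap Am Bp Bm z [y [y01 yopt zopt [eAp eAm] [eBp eBm]]].
have hy := yopt.1.
have Sab : PS P setT = PS P (Aset TA TB) + PS P (Bset TA TB).
  by rewrite /PS (eq_bigl xpredT) ?sumT // => v; rewrite inE.
move: S0 Sab.
set a := PS P (Aset TA TB); set b := PS P (Bset TA TB); set S := PS P setT.
move=> S0 Sab.
have PSge0 : forall X, 0 <= PS P X by move=> X; apply: sumr_ge0 => v _.
have a0 : 0 <= a by apply: PSge0.
have b0 : 0 <= b by apply: PSge0.
pose YA := \sum_(v in Aset TA TB) P v * y v.
pose YB := \sum_(v in Bset TA TB) P v * y v.
have hAp : PS P Ap = YA by rewrite eAp PS_sel.
have hBp : PS P Bp = YB by rewrite eBp PS_sel.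
have sA : Ap \subset Aset TA TB.
  by rewrite eAp; apply/subsetP => w; rewrite inE; case/andP.
have sB : Bp \subset Bset TA TB.
  by rewrite eBp; apply/subsetP => w; rewrite inE; case/andP.
have hAm : PS P Am = a - YA by rewrite eAm PS_diff // hAp.
have hBm : PS P Bm = b - YB by rewrite eBm PS_diff // hBp.
have y0 : forall v, 0 <= y v by case: hy.
have YA0 : 0 <= YA by apply: sumr_ge0 => v _; apply: mulr_ge0.
have YB0 : 0 <= YB by apply: sumr_ge0 => v _; apply: mulr_ge0.
have YAa : YA <= a by have := PSge0 Am; rewrite hAm subr_ge0.
have YBb : YB <= b by have := PSge0 Bm; rewrite hBm subr_ge0.
have YAE : YA = \sum_x P (inl x) * y (inl x) by rewrite /YA sumA.
have YBE : YB = \sum_x P (inr x) * y (inr x) by rewrite /YB sumB.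
have aE : a = \sum_x P (inl x) by rewrite /a /PS sumA.
have bE : b = \sum_x P (inr x) by rewrite /b /PS sumB.
have objE : forall y', primal_obj P y' =
   \sum_x rw P (inl x) * y' (inl x) + \sum_x rw P (inr x) * y' (inr x).
  by move=> y'; rewrite /primal_obj big_sumType.
have optA := yopt.2 _ (@yA_feas _ _ E R).
have optB := yopt.2 _ (@yB_feas _ _ E R).
have dz : dual_obj z = primal_obj P y.
  have [z' [fz' hz']] := strong yopt.
  apply/le_anti/andP; split; last exact: (weak hy zopt.1).
  exact: le_trans (zopt.2 _ fz') hz'.
have npos : ~~ ((0 < a) && (0 < b)) -> a = 0 \/ b = 0.
  rewrite negb_and -!leNgt => /orP [h|h]; [left|right]; apply: le_anti; rewrite ?h //.
case: (boolP ((0 < a) && (0 < b))) => pos.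
  have /andP [ha hb] := pos.
  have rwA : forall x, rw P (inl x) = P (inl x) * S / a by move=> x; rewrite /rw pos.
  have rwB : forall x, rw P (inr x) = P (inr x) * S / b by move=> x; rewrite /rw pos.
  have objA : primal_obj P (@yA TA TB R) = S.
    rewrite objE [X in _ + X]big1 ?addr0 => [|x _]; last by rewrite mulr0.
    under eq_bigr do rewrite rwA mulr1 mulrAC.
    by rewrite -!mulr_suml -aE divff ?mul1r // gt_eqF.
  have objB : primal_obj P (@yB TA TB R) = S.
    rewrite objE [X in X + _]big1 ?add0r => [|x _]; last by rewrite mulr0.
    under eq_bigr do rewrite rwB mulr1 mulrAC.
    by rewrite -!mulr_suml -bE divff ?mul1r // gt_eqF.
  have objy : primal_obj P y = S / a * YA + S / b * YB.
    rewrite objE YAE YBE !mulr_sumr; congr (_ + _); apply: eq_bigr => x _;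
      rewrite ?rwA ?rwB; by field; rewrite gt_eqF.
  have key1 : a * b <= a * YB + b * YA.
    have h1 : S * (a * b) <= (S / a * YA + S / b * YB) * (a * b).
      by apply: ler_wpM2r; [apply: mulr_ge0; exact: ltW|rewrite -objy -{1}objA].
    have e : (S / a * YA + S / b * YB) * (a * b) = S * (a * YB + b * YA).
      by field; rewrite ?gt_eqF.
    by move: h1; rewrite e ler_pM2l.
  split; first by rewrite hAp hAm hBp hBm; nra.
  rewrite hAp hAm hBp hBm => heq.
  have key2 : a * b = a * YB + b * YA by nra.
  have objS : primal_obj P y = S.
    rewrite objy.
    have -> : S / a * YA + S / b * YB = S * (a * YB + b * YA) / (a * b).
      by field; rewrite ?gt_eqF.
    by rewrite -key2 mulfK // mulf_neq0 // gt_eqF.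
  split.
  - by rewrite dz.
  - case=> x; rewrite inE // => _.
    have hc := cslack (@yA_feas _ _ E R) zopt.1 (etrans objA (etrans (esym objS) (esym dz))) (v := inl x) erefl.
    rewrite hc rwA.
    by field; rewrite ?gt_eqF.
  - case=> x; rewrite inE // => _.
    have hc := cslack (@yB_feas _ _ E R) zopt.1 (etrans objB (etrans (esym objS) (esym dz))) (v := inr x) erefl.
    rewrite hc rwB.
    by field; rewrite ?gt_eqF.
have rwP : forall v, rw P v = P v by move=> v; rewrite /rw (negbTE pos).
have objA : primal_obj P (@yA TA TB R) = a.
  rewrite objE [X in _ + X]big1 ?addr0 => [|x _]; last by rewrite mulr0.
  by rewrite aE; apply: eq_bigr => x _; rewrite rwP mulr1.
have objB : primal_obj P (@yB TA TB R) = b.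
  rewrite objE [X in X + _]big1 ?add0r => [|x _]; last by rewrite mulr0.
  by rewrite bE; apply: eq_bigr => x _; rewrite rwP mulr1.
have objy : primal_obj P y = YA + YB.
  by rewrite objE YAE YBE; congr (_ + _); apply: eq_bigr => x _; rewrite rwP.
have zab := npos pos.
split.
  rewrite hAp hAm hBp hBm; case: zab => ->; nra.
move=> _.
have objS : primal_obj P y = S.
  move: optA optB; rewrite objA objB objy Sab; case: zab => h; rewrite h; lra.
split.
- by rewrite dz.
- case=> x; rewrite inE // => _.
  case: zab => h.
    have Px : P (inl x) = 0.
      apply: (@psumr_eq0P R _ (fun v => v \in Aset TA TB) P (fun v _ => P0 v)) => //.
      by rewrite inE.
    by rewrite Px h mul0r mul0r.
  have hc : MTz z (inl x) = rw P (inl x).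
    by apply: (cslack (@yA_feas _ _ E R) zopt.1) => //; rewrite objA dz objS Sab h addr0.
  rewrite hc rwP.
  have aS : a = S by rewrite Sab h addr0.
  by rewrite aS divff ?mul1r // gt_eqF.
- case=> x; rewrite inE // => _.
  case: zab => h; last first.
    have Px : P (inr x) = 0.
      apply: (@psumr_eq0P R _ (fun v => v \in Bset TA TB) P (fun v _ => P0 v)) => //.
      by rewrite inE.
    by rewrite Px h mul0r mul0r.
  have hc : MTz z (inr x) = rw P (inr x).
    by apply: (cslack (@yB_feas _ _ E R) zopt.1) => //; rewrite objB dz objS Sab h add0r.
  rewrite hc rwP.
  have bS : b = S by rewrite Sab h add0r.
  by rewrite bS divff ?mul1r // gt_eqF.
Qed.
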